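(* Let $X$ be a convex subset of $\mathbb{R}^n$, $f=(f_1,\ldots,f_m):X\to\mathbb{R}^m$ a convex mapping, and $g_1,\ldots,g_\ell:X\to\mathbb{R}$ convex functions ($\ell\ge1$). Let $\Omega=\{x\in X: g_1(x)\le0,\ldots,g_\ell(x)\le0\}$. Then the following are equivalent: $(\alpha)$ $\mathrm{WE}(f|_\Omega,\Omega)=\mathrm{E}(f|_\Omega,\Omega)$; $(\beta)$ $\displaystyle\bigcup_{\emptyset\neq I\subseteq M}\mathrm{E}((f|_\Omega)_I,\Omega)\subseteq\mathrm{E}(f|_\Omega,\Omega)$, where $M=\{1,\ldots,m\}$.
   Context: A mapping $f=(f_1,\ldots,f_m)$ on a convex set is convex if each $f_i$ is a convex function. Let $M=\{1,\ldots,m\}$. For a nonempty $I\subseteq M$ and $y,y'\in\mathbb{R}^m$: $y\lneq_I y'$ means $y_i\leq y'_i$ for all $i\in I$ and $y_j<y'_j$ for some $j\in I$; $y<_I y'$ means $y_i<y'_i$ for all $i\in I$. For $Y\subseteq\mathbb{R}^m$, $\mathrm{M}_I Y$ (resp. $\mathrm{WM}_I Y$) is the set of all $y'\in Y$ for which there is no $y\in Y$ with $y\lneq_I y'$ (resp. $y<_I y'$). For a mapping $h=(h_1,\ldots,h_m):Z\to\mathbb{R}^m$ and $I=\{i_1<\cdots<i_k\}$, $h_I=(h_{i_1},\ldots,h_{i_k})$, $\mathrm{E}(h_I,Z)=h^{-1}(\mathrm{M}_I h(Z))$, $\mathrm{WE}(h_I,Z)=h^{-1}(\mathrm{WM}_I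 h(Z))$; $\mathrm{E}(h,Z)=\mathrm{E}(h_M,Z)$, $\mathrm{WE}(h,Z)=\mathrm{WE}(h_M,Z)$. $f|_\Omega$ denotes the restriction of $f$ to $\Omega$. *)

(* Defs.v *)
(* A point of R^n is encoded as x : nat -> R whose coordinates i >= n vanish
   (see [in_Rn]); every X considered is required to lie inside this copy of R^n.
   A mapping f = (f_1,...,f_m) : X -> R^m is encoded as f : (nat -> R) -> nat -> R,
   with components indexed by i = 0..m-1 (only those are ever used). *)
From Stdlib Require Import Reals.
Open Scope R_scope.

Definition in_Rn (n : nat) (x : nat -> R) : Prop := forall i, (n <= i)%nat -> x i = 0.

Definition comb (t : R) (x y : nat -> R) : nat -> R := fun i => t * x i + (1 - t) * y i.

Definition convex_set (X : (nat -> R) -> Prop) : Prop :=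
  forall x y t, X x -> X y -> 0 <= t -> t <= 1 -> X (comb t x y).

Definition convex_fun (X : (nat -> R) -> Prop) (h : (nat -> R) -> R) : Prop :=
  forall x y t, X x -> X y -> 0 <= t -> t <= 1 ->
    h (comb t x y) <= t * h x + (1 - t) * h y.

Definition convex_map (m : nat) (X : (nat -> R) -> Prop) (f : (nat -> R) -> nat -> R) : Prop :=
  forall i, (i < m)%nat -> convex_fun X (fun x => f x i).

Definition lneqI (I : nat -> Prop) (y y' : nat -> R) : Prop :=
  (forall i, I i -> y i <= y' i) /\ (exists j, I j /\ y j < y' j).

Definition ltI (I : nat -> Prop) (y y' : nat -> R) : Prop :=
  forall i, I i -> y i < y' i.

Definition Eff (h : (nat -> R) -> nat -> R) (I : nat -> Prop) (Z : (nat -> R) -> Prop)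
  (x : nat -> R) : Prop :=
  Z x /\ ~ (exists z, Z z /\ lneqI I (h z) (h x)).

Definition WEff (h : (nat -> R) -> nat -> R) (I : nat -> Prop) (Z : (nat -> R) -> Prop)
  (x : nat -> R) : Prop :=
  Z x /\ ~ (exists z, Z z /\ ltI I (h z) (h x)).

(* M = {1,...,m}, encoded as {0,...,m-1} *)
Definition fullM (m : nat) : nat -> Prop := fun i => (i < m)%nat.

(* Main.v *)
Require Import Defs.
From Stdlib Require Import Reals Lra Lia Classical.
Open Scope R_scope.

Fixpoint cnt (f : (nat->R)->nat->R) (x z : nat->R) (k:nat) : nat :=
  match k with O => O
  | S k' => (cnt f x z k' + if Rlt_dec (f z k') (f x k') then 0 else 1)%nat end.

Lemma cnt0 f x z k : cnt f x z k = O -> forall i, (i<k)%nat -> f z i < f x i.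
Proof.
  induction k as [|k IH]; simpl; intros H i Hi; [lia|].
  destruct (Rlt_dec (f z k) (f x k)) as [h|h]; [|lia].
  destruct (Nat.eq_dec i k) as [->|]; [exact h|]. apply IH; lia.
Qed.

Lemma cnt_pos f x z k : (0 < cnt f x z k)%nat -> exists i, (i<k)%nat /\ ~ f z i < f x i.
Proof.
  induction k as [|k IH]; simpl; intros H; [lia|].
  destruct (Rlt_dec (f z k) (f x k)) as [h|h].
  - destruct IH as [i [? ?]]; [lia|]. exists i; split; [lia|auto].
  - exists k; split; [lia|auto].
Qed.

Lemma cnt_lt f x z z' i0 k :
  (forall i, (i<k)%nat -> f z i < f x i -> f z' i < f x i) ->
  ~ f z i0 < f x i0 -> f z' i0 < f x i0 ->
  (cnt f x z' k <= cnt f x z k)%nat /\ ((i0 < k)%nat -> (cnt f x z' k < cnt f x z k)%nat).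
Proof.
  intros Hs Hn Hp. induction k as [|k IH]; simpl; [split; lia|].
  destruct IH as [IH1 IH2]; [intros; apply Hs; auto; lia|].
  destruct (Rlt_dec (f z k) (f x k)) as [h|h];
  destruct (Rlt_dec (f z' k) (f x k)) as [h'|h'].
  - split; [lia|]. intros. destruct (Nat.eq_dec i0 k) as [->|]; [tauto|]. assert (i0<k)%nat by lia. specialize (IH2 H0). lia.
  - exfalso. apply h'. apply Hs; auto.
  - split; lia.
  - split; [lia|]. intros. destruct (Nat.eq_dec i0 k) as [->|]; [tauto|]. assert (i0<k)%nat by lia. specialize (IH2 H0). lia.
Qed.

Lemma small_t (a b c : nat -> R) k :
  exists t, 0 < t <= 1 /\ forall j, (j<k)%nat -> b j < c j ->
    forall s, 0 < s <= t -> s * a j + (1 - s) * b j < c j.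
Proof.
  induction k as [|k IH].
  - exists 1; split; [lra|]. intros; lia.
  - destruct IH as [t [Ht IH]].
    destruct (Rlt_dec (b k) (c k)) as [h|h].
    + destruct (Rle_dec (a k) (b k)) as [h2|h2].
      * exists t; split; auto. intros j Hj Hb s Hs.
        destruct (Nat.eq_dec j k) as [->|]; [nra|]. apply IH; auto; lia.
      * set (q := (c k - b k) / (2 * (a k - b k))).
        assert (Hq : q * (2 * (a k - b k)) = c k - b k) by (unfold q; field; lra).
        assert (Hq0 : 0 < q) by (unfold q; apply Rdiv_lt_0_compat; lra).
        exists (Rmin t q). split.
        { split; [apply Rmin_glb_lt; lra|]. pose proof (Rmin_l t q); lra. }
        intros j Hj Hb s Hs. pose proof (Rmin_l t q). pose proof (Rmin_r t q).
        destruct (Nat.eq_dec j k) as [->|]; [nra|]. apply IH; auto; lra || lia.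
    + exists t; split; auto. intros j Hj Hb s Hs.
      destruct (Nat.eq_dec j k) as [->|]; [tauto|]. apply IH; auto; lia.
Qed.

Lemma key (m:nat) (Om : (nat->R)->Prop) f x :
  convex_set Om -> convex_map m Om f -> Om x ->
  (forall I : nat -> Prop, (forall i, I i -> (i<m)%nat) -> (exists i, I i) ->
     exists w, Om w /\ lneqI I (f w) (f x)) ->
  exists z, Om z /\ ltI (fullM m) (f z) (f x).
Proof.
  intros Hc Hf Hx HI.
  assert (Main : forall N z, (cnt f x z m <= N)%nat -> Om z ->
     (forall i, (i<m)%nat -> f z i <= f x i) -> exists z, Om z /\ ltI (fullM m) (f z) (f x)).
  { induction N as [|N IHN]; intros z Hn Hz Hle.
    - exists z; split; auto. intros i Hi. apply (cnt0 f x z m); [lia|exact Hi].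
    - destruct (Nat.eq_dec (cnt f x z m) 0) as [H0|H0].
      { exists z; split; auto. intros i Hi. apply (cnt0 f x z m); [lia|exact Hi]. }
      destruct (HI (fun i => (i<m)%nat /\ ~ f z i < f x i)) as [w [Hw [Hw1 [i0 [[Hi0 Hi0'] Hw2]]]]].
      { intros i [? ?]; auto. }
      { destruct (cnt_pos f x z m) as [i [? ?]]; [lia|]. exists i; auto. }
      destruct (small_t (fun j => f w j) (fun j => f z j) (fun j => f x j) m) as [t [Ht Hsm]].
      set (z' := comb t w z).
      assert (Hz' : Om z') by (apply Hc; auto; lra).
      assert (Hcv : forall i, (i<m)%nat -> f z' i <= t * f w i + (1-t) * f z i).
      { intros i Hi. apply (Hf i Hi); auto; lra. }
      assert (Hstr : forall i, (i<m)%nat -> f z i < f x i -> f z' i < f x i).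
      { intros i Hi Hlt. pose proof (Hcv i Hi). pose proof (Hsm i Hi Hlt t ltac:(lra)). lra. }
      assert (Hle' : forall i, (i<m)%nat -> f z' i <= f x i).
      { intros i Hi. destruct (Rlt_dec (f z i) (f x i)) as [h|h].
        - left; auto.
        - pose proof (Hcv i Hi). pose proof (Hw1 i (conj Hi h)). pose proof (Hle i Hi). nra. }
      assert (Hi0s : f z' i0 < f x i0).
      { pose proof (Hcv i0 Hi0). pose proof (Hle i0 Hi0). nra. }
      destruct (cnt_lt f x z z' i0 m Hstr Hi0' Hi0s) as [_ Hlt].
      apply (IHN z'); auto. specialize (Hlt Hi0). lia. }
  apply (Main (cnt f x x m) x); auto. intros; lra.
Qed.

Theorem corollary6p3 (n m l : nat)
  (X : (nat -> R) -> Prop) (f : (nat -> R) -> nat -> R) (g : nat -> (nat -> R) -> R) :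
  (1 <= m)%nat -> (1 <= l)%nat ->
  (forall x, X x -> in_Rn n x) ->
  convex_set X ->
  convex_map m X f ->
  (forall k, (k < l)%nat -> convex_fun X (g k)) ->
  let Omega := fun x => X x /\ (forall k, (k < l)%nat -> g k x <= 0) in
  ((forall x, WEff f (fullM m) Omega x <-> Eff f (fullM m) Omega x) <->
   (forall (I : nat -> Prop) x,
      (forall i, I i -> (i < m)%nat) -> (exists i, I i) ->
      Eff f I Omega x -> Eff f (fullM m) Omega x)).
Proof.
  intros Hm Hl _ HX Hf Hg Omega. split.
  - intros Ha I x HIm [i0 Hi0] [Hx HE]. apply Ha. split; auto.
    intros [z [Hz Hlt]]. apply HE. exists z; split; auto. split.
    + intros i Hi. left. apply Hlt. apply HIm; auto.
    + exists i0; split; auto. apply Hlt. apply HIm; auto.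
  - intros Hb x. split.
    + intros [Hx HW].
      destruct (classic (exists I : nat -> Prop, (forall i, I i -> (i<m)%nat) /\ (exists i, I i) /\ Eff f I Omega x)) as [[I [H1 [H2 H3]]]|Hno].
      * exact (Hb I x H1 H2 H3).
      * exfalso. apply HW. apply key.
        { intros a b t [Ha Ha'] [Hb' Hb''] Ht0 Ht1. split; [apply HX; auto|].
          intros k Hk. pose proof (Hg k Hk a b t Ha Hb' Ht0 Ht1). pose proof (Ha' k Hk). pose proof (Hb'' k Hk). nra. }
        { intros i Hi a b t [Ha _] [Hb' _] Ht0 Ht1. apply (Hf i Hi); auto. }
        { auto. }
        intros I H1 H2. apply NNPP. intros Hn. apply Hno. exists I; split; [auto|split; [auto|split; [exact Hx|]]].
        intros Hc. apply Hn. destruct Hc as [z [? ?]]. exists z; auto.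
    + intros [Hx HE]. split; auto. intros [z [Hz Hlt]]. apply HE. exists z; split; auto. split.
      * intros i Hi. left; apply Hlt; auto.
      * exists 0%nat. split; [unfold fullM; lia|]. apply Hlt. unfold fullM; lia.
Qed.
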